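(* Let $n\ge 4$, let $K'\subseteq[k]$ with $|K'|\ge n$, let $\pi$ assign to each $n$-element subset $S\subseteq[k]$ a string $\pi(S)$ of length $n$ that is an ordering of $S$, and suppose every $(n-1)$-element subset $R\subseteq K'$ is semi-frozen, with a fixed choice of semi-freezing function $h_R$ and wildcard index $w_R$. Let $Q\subseteq K'$ with $|Q|=n-2$, let $R,R'\subseteq K'$ be distinct $(n-1)$-element sets containing $Q$, let $r$ be the element of $R\setminus Q$ and $r'$ the element of $R'\setminus Q$. Suppose there exist distinct $q,q'\in Q$ with $h_R(q)\ne h_{R'}(q)$ and $h_R(q')\ne h_{R'}(q')$. Then, after possibly interchanging the names of $q$ and $q'$: (1) $h_R(q)=h_{R'}(r')$ and $h_R(r)=h_{R'}(q')$; (2) $h_R(q')=w_{R'}$ and $h_{R'}(q)=w_R$; (3) $h_R(q'')=h_{R'}(q'')$ for every $q''\in Q\setminus\{q,q'\}$.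
   Context: $[k]=\{1,\dots,k\}$; $\pi(S)[i]$ is the letter at position $i\in[n]$ of $\pi(S)$. For a set $R\subseteq[k]$, $\mathcal U_R$ is the set of all sets $S\subseteq[k]$ with $R\subset S$ and $|S|=|R|+1$. A set $R$ with $|R|=n-1$ is semi-frozen with semi-freezing function $h_R$ and wildcard index $w_R$ if $h_R:R\to[n]$ is one-to-one, $w_R$ is the unique index of $[n]$ not in the image of $h_R$, and for every $r\in R$ and every $S\in\mathcal U_R$, either $\pi(S)[h_R(r)]=r$ or $\pi(S)[w_R]=r$. *)

(* Defs.v *)
From mathcomp Require Import all_boot.
Set Implicit Arguments. Unset Strict Implicit. Unset Printing Implicit Defensive.

(* Letters of [k] are modelled by 'I_k, positions of [n] by 'I_n.
   An assignment pi maps every set S of letters to a string of length n,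
   i.e. a function 'I_n -> 'I_k giving the letter at each position. *)
Definition assignment (k n : nat) := {set 'I_k} -> 'I_n -> 'I_k.

Definition is_ordering_assignment (k n : nat) (pi : assignment k n) : Prop :=
  forall S : {set 'I_k}, #|S| = n ->
    injective (pi S) /\ [set pi S i | i : 'I_n] = S.

Definition U_ (k : nat) (R : {set 'I_k}) : {set {set 'I_k}} :=
  [set S : {set 'I_k} | (R \proper S) && (#|S| == #|R|.+1)].

Definition semi_frozen (k n : nat) (pi : assignment k n)
    (R : {set 'I_k}) (h : 'I_k -> 'I_n) (w : 'I_n) : Prop :=
  [/\ #|R| = n.-1,
      {in R &, injective h},
      (forall i : 'I_n, i \notin h @: R <-> i = w)
    & forall r, r \in R -> forall S, S \in U_ R ->
        pi S (h r) = r \/ pi S w = r].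

(* Main.v *)
Require Import Defs.
From mathcomp Require Import all_boot.
Set Implicit Arguments. Unset Strict Implicit. Unset Printing Implicit Defensive.

Lemma core k n (P : 'I_n -> 'I_k) (Pinj : injective P) (Q R R' : {set 'I_k})
  (r r' : 'I_k) (hR hR' : 'I_k -> 'I_n) (wR wR' : 'I_n) (a b : 'I_k) :
  R = r |: Q -> R' = r' |: Q -> r \notin Q -> r' \notin Q ->
  (forall x, x \in R -> P (hR x) = x \/ P wR = x) ->
  (forall x, x \in R' -> P (hR' x) = x \/ P wR' = x) ->
  {in R &, injective hR} -> {in R' &, injective hR'} ->
  (forall i, P i = r' \/ P i \in R) -> (forall i, P i = r \/ P i \in R') ->
  a \in Q -> b \in Q -> a != b ->
  P wR = a -> P (hR b) = b -> P wR' = b -> P (hR' a) = a ->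
  P (hR a) != a -> P (hR' b) != b ->
  [/\ hR a = hR' r' /\ hR r = hR' b, hR b = wR' /\ hR' a = wR
    & forall q'', q'' \in Q -> q'' != a -> q'' != b -> hR q'' = hR' q''].
Proof.
move=> eR eR' rQ r'Q FR FR' iR iR' PT PT' aQ bQ ab Pa Pb Pb' Pa' na nb.
have inR x : x \in Q -> x \in R by move=> xQ; rewrite eR setU1r.
have inR' x : x \in Q -> x \in R' by move=> xQ; rewrite eR' setU1r.
have rR : r \in R by rewrite eR setU11.
have r'R' : r' \in R' by rewrite eR' setU11.
split.
- split.
  + apply: (Pinj).
    have -> : P (hR' r') = r'.
      case: (FR' r' r'R') => // e; move: r'Q; rewrite -e Pb' bQ //.
    case: (PT (hR a)) => // yR.
    case: (FR _ yR) => e.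
    * have := iR _ _ yR (inR _ aQ) (Pinj _ _ (etrans e erefl)) => ey.
      by move: na; rewrite ey eqxx.
    * by move: na; rewrite -e Pa eqxx.
  + apply: (Pinj).
    have -> : P (hR r) = r.
      case: (FR r rR) => // e; move: rQ; rewrite -e Pa aQ //.
    case: (PT' (hR' b)) => // yR.
    case: (FR' _ yR) => e.
    * have := iR' _ _ yR (inR' _ bQ) (Pinj _ _ (etrans e erefl)) => ey.
      by move: nb; rewrite ey eqxx.
    * by move: nb; rewrite -e Pb' eqxx.
- by split; apply: (Pinj); rewrite ?Pb ?Pb' ?Pa ?Pa'.
- move=> x xQ xa xb; apply: (Pinj).
  have e1 : P (hR x) = x.
    case: (FR x (inR _ xQ)) => // e; by move: xa; rewrite -e Pa eqxx.
  have e2 : P (hR' x) = x.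
    case: (FR' x (inR' _ xQ)) => // e; by move: xb; rewrite -e Pb' eqxx.
  by rewrite e1 e2.
Qed.

Theorem lemma3p13 (k n : nat) (K' : {set 'I_k}) (pi : assignment k n)
  (h_ : {set 'I_k} -> 'I_k -> 'I_n) (w_ : {set 'I_k} -> 'I_n) :
  4 <= n ->
  n <= #|K'| ->
  is_ordering_assignment pi ->
  (forall R : {set 'I_k}, R \subset K' -> #|R| = n.-1 ->
     semi_frozen pi R (h_ R) (w_ R)) ->
  forall (Q R R' : {set 'I_k}) (r r' q q' : 'I_k),
  Q \subset K' -> #|Q| = n - 2 ->
  R \subset K' -> R' \subset K' -> #|R| = n.-1 -> #|R'| = n.-1 ->
  R != R' -> Q \subset R -> Q \subset R' ->
  r \in R :\: Q -> r' \in R' :\: Q ->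
  q \in Q -> q' \in Q -> q != q' ->
  h_ R q != h_ R' q -> h_ R q' != h_ R' q' ->
  exists a b : 'I_k,
    ((a == q) && (b == q') || (a == q') && (b == q)) /\
    [/\ h_ R a = h_ R' r' /\ h_ R r = h_ R' b,
        h_ R b = w_ R' /\ h_ R' a = w_ R
      & forall q'', q'' \in Q -> q'' != a -> q'' != b ->
          h_ R q'' = h_ R' q''].
Proof.
move=> n4 _ ord SF Q R R' r r' q q' _ cQ sRK sR'K cR cR' RR' QR QR' rin r'in
  qQ q'Q qq' hq hq'.
move: rin r'in; rewrite !inE => /andP[rQ rR] /andP[r'Q r'R'].
have e1 : (n - 2).+1 = n.-1 by case: (n) n4 => [|[|[|m]]].
have e2 : n.-1.+1 = n by case: (n) n4 => [|[|[|m]]].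
have eR : R = r |: Q.
  apply/eqP; rewrite eq_sym eqEcard; apply/andP; split.
    by rewrite subUset sub1set rR QR.
  by rewrite cardsU1 rQ cR cQ /= add1n e1.
have eR' : R' = r' |: Q.
  apply/eqP; rewrite eq_sym eqEcard; apply/andP; split.
    by rewrite subUset sub1set r'R' QR'.
  by rewrite cardsU1 r'Q cR' cQ /= add1n e1.
have rr' : r != r'.
  by apply: contraNneq RR' => e; rewrite eR eR' e.
have r'nR : r' \notin R by rewrite eR !inE negb_or eq_sym rr' r'Q.
have rnR' : r \notin R' by rewrite eR' !inE negb_or rr' rQ.
set T := r' |: R.
have eT : T = r |: R' by rewrite /T eR eR' setUCA.
have cT : #|T| = n by rewrite cardsU1 r'nR cR /= add1n e2.
have TU : T \in U_ R.
  rewrite inE cT cR prednK ?eqxx ?andbT; last by apply: leq_trans n4.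
  by apply: properUr; rewrite sub1set.
have TU' : T \in U_ R'.
  rewrite inE cT cR' prednK ?eqxx ?andbT; last by apply: leq_trans n4.
  by rewrite eT; apply: properUr; rewrite sub1set.
have [Pinj Pim] := ord T cT.
set P := pi T.
have PT i : P i = r' \/ P i \in R.
  have : P i \in T by rewrite -Pim; apply: imset_f.
  by rewrite /T in_setU1 => /orP[/eqP|]; auto.
have PT' i : P i = r \/ P i \in R'.
  have : P i \in T by rewrite -Pim; apply: imset_f.
  by rewrite eT in_setU1 => /orP[/eqP|]; auto.
have [_ iR _ FR0] := SF R sRK cR.
have [_ iR' _ FR0'] := SF R' sR'K cR'.
have FR x : x \in R -> P (h_ R x) = x \/ P (w_ R) = x by move=> xR; exact: FR0.
have FR' x : x \in R' -> P (h_ R' x) = x \/ P (w_ R') = x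
  by move=> xR; exact: FR0'.
have inR x : x \in Q -> x \in R by move=> xQ; rewrite eR setU1r.
have inR' x : x \in Q -> x \in R' by move=> xQ; rewrite eR' setU1r.
have notboth x : x \in Q -> h_ R x != h_ R' x -> P (h_ R x) = x -> P (h_ R' x) != x.
  move=> _ nx e; apply/eqP => e'; move/eqP: nx; apply; apply: (Pinj); by rewrite -/P e e'.
case: (boolP (P (h_ R q) == q)) => [/eqP Hq | na].
- have nb := notboth _ qQ hq Hq.
  have Pb' : P (w_ R') = q by case: (FR' q (inR' _ qQ)) => // e; rewrite e eqxx in nb.
  have Pa' : P (h_ R' q') = q'.
    case: (FR' q' (inR' _ q'Q)) => // e; by move: qq'; rewrite -e Pb' eqxx.
  have na : P (h_ R q') != q'.
    apply/eqP => e; move/eqP: hq'; apply; apply: (Pinj); by rewrite -/P e Pa'.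
  have Pa : P (w_ R) = q' by case: (FR q' (inR _ q'Q)) => // e; rewrite e eqxx in na.
  exists q', q; split; first by rewrite !eqxx orbT.
  apply: (core Pinj eR eR' rQ r'Q FR FR' iR iR' PT PT' q'Q qQ _ Pa Hq Pb' Pa' na nb).
  by rewrite eq_sym.
- have Pa : P (w_ R) = q by case: (FR q (inR _ qQ)) => // e; rewrite e eqxx in na.
  have Pb : P (h_ R q') = q'.
    case: (FR q' (inR _ q'Q)) => // e; by move: qq'; rewrite -e Pa eqxx.
  have nb := notboth _ q'Q hq' Pb.
  have Pb' : P (w_ R') = q' by case: (FR' q' (inR' _ q'Q)) => // e; rewrite e eqxx in nb.
  have Pa' : P (h_ R' q) = q.
    case: (FR' q (inR' _ qQ)) => // e; by move: qq'; rewrite -e Pb' eqxx.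
  exists q, q'; split; first by rewrite !eqxx.
  exact: (core Pinj eR eR' rQ r'Q FR FR' iR iR' PT PT' qQ q'Q qq' Pa Pb Pb' Pa' na nb).
Qed.
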